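(* Let $n\ge3$, $\mu_1,\mu_2,\beta>0$, $p=2q+1$ with $\frac{n}{n-2}<p<\frac{n+2}{n-2}$, let $(u,v)$ be a nonnegative radial solution of (S) and $\bar w_1,\bar w_2$ as in the context. Then $(\bar w_1,\bar w_2)$ solves $$\bar w_i''+\tau_0\bar w_i'-\sigma_0\bar w_i+\mu_i\bar w_i^{2q+1}+\beta\bar w_i^q\bar w_j^{q+1}=0\ \ (\{i,j\}=\{1,2\})\ \text{on }\mathbb{R},$$ the function $\bar\Psi(t)$ is nondecreasing and uniformly bounded on $\mathbb{R}$, and $$\frac{d}{dt}\bar\Psi(t)=-\tau_0\big[(\bar w_1')^2+(\bar w_2')^2\big](t).$$
   Context: System (S): $-\Delta u=\mu_1u^{2q+1}+\beta u^qv^{q+1}$, $-\Delta v=\mu_2v^{2q+1}+\beta v^qu^{q+1}$ in $\mathbb{R}^n\setminus\{0\}$; nonnegative solutions are $C^2(\mathbb{R}^n\setminus\{0\})$ pairs with $u,v\ge0$. $\bar u(x)=|x|^{2-n}u(x/|x|^2)$, $\bar v(x)=|x|^{2-n}v(x/|x|^2)$, $\alpha=p(n-2)-(n+2)$, $\delta_0=\frac{2+\alpha}{p-1}$, $\bar w_1(t)=e^{-\delta_0t}\bar u(e^{-t})$, $\bar w_2(t)=e^{-\delta_0t}\bar v(e^{-t})$, $\tau_0=\frac{n-2}{p-1}\big(\frac{n+2+2\alpha}{n-2}-p\big)<0$, $\sigma_0=\frac{(2+\alpha)(n-2)}{(p-1)^2}\big(p-\frac{n+\alpha}{n-2}\big)>0$,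 and $$\bar\Psi(t)=\tfrac12\big(|\bar w_1'|^2+|\bar w_2'|^2-\sigma_0(\bar w_1^2+\bar w_2^2)\big)+\tfrac1{p+1}\big(\mu_1\bar w_1^{p+1}+2\beta\bar w_1^{q+1}\bar w_2^{q+1}+\mu_2\bar w_2^{p+1}\big).$$ *)

(* Defs.v *)
From Stdlib Require Import Reals Lra.
Open Scope R_scope.

(* Points of R^n are represented as maps nat -> R whose coordinates k >= n vanish. *)
Definition pt := nat -> R.
Definition inRn (n : nat) (x : pt) : Prop := forall k, (n <= k)%nat -> x k = 0.

Fixpoint sumR (n : nat) (f : nat -> R) : R :=
  match n with O => 0 | S k => sumR k f + f k end.

Definition nrm (n : nat) (x : pt) : R := sqrt (sumR n (fun i => x i ^ 2)).

Definition shift (x : pt) (i : nat) (t : R) : pt :=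
  fun k => if Nat.eqb k i then x k + t else x k.

Definition partial_lim (f : pt -> R) (x : pt) (i : nat) (l : R) : Prop :=
  derivable_pt_lim (fun t => f (shift x i t)) 0 l.

Definition cont_Rn (n : nat) (f : pt -> R) (x : pt) : Prop :=
  forall eps, 0 < eps -> exists d, 0 < d /\
    forall y, inRn n y -> nrm n (fun k => y k - x k) < d -> Rabs (f y - f x) < eps.

Definition C2_punct (n : nat) (f : pt -> R) (D1 : nat -> pt -> R)
  (D2 : nat -> nat -> pt -> R) : Prop :=
  forall x, inRn n x -> 0 < nrm n x ->
    cont_Rn n f x /\
    forall i, (i < n)%nat ->
      partial_lim f x i (D1 i x) /\ cont_Rn n (D1 i) x /\
      forall j, (j < n)%nat ->
        partial_lim (D1 i) x j (D2 i j x) /\ cont_Rn n (D2 i j) x.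

(* real power of a nonnegative number, with 0^a = 0 (a > 0 in all uses) *)
Definition rpow (x a : R) : R := if Rle_dec x 0 then 0 else Rpower x a.

Definition sol_S (n : nat) (mu1 mu2 beta q : R) (u v : pt -> R) : Prop :=
  (forall x, inRn n x -> 0 < nrm n x -> 0 <= u x /\ 0 <= v x) /\
  exists D1u D2u D1v D2v,
    C2_punct n u D1u D2u /\ C2_punct n v D1v D2v /\
    forall x, inRn n x -> 0 < nrm n x ->
      - sumR n (fun i => D2u i i x)
        = mu1 * rpow (u x) (2 * q + 1) + beta * rpow (u x) q * rpow (v x) (q + 1) /\
      - sumR n (fun i => D2v i i x)
        = mu2 * rpow (v x) (2 * q + 1) + beta * rpow (v x) q * rpow (u x) (q + 1).

Definition radial (n : nat) (f : pt -> R) : Prop :=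
  forall x y, inRn n x -> inRn n y -> 0 < nrm n x -> nrm n x = nrm n y -> f x = f y.

Definition kelvin (n : nat) (f : pt -> R) (x : pt) : R :=
  Rpower (nrm n x) (2 - INR n) * f (fun k => x k / (nrm n x) ^ 2).

Definition radpt (r : R) : pt := fun k => if Nat.eqb k 0 then r else 0.

Definition alpha0 (n : nat) (p : R) : R := p * (INR n - 2) - (INR n + 2).
Definition delta0 (n : nat) (p : R) : R := (2 + alpha0 n p) / (p - 1).
Definition tau0 (n : nat) (p : R) : R :=
  (INR n - 2) / (p - 1) * ((INR n + 2 + 2 * alpha0 n p) / (INR n - 2) - p).
Definition sigma0 (n : nat) (p : R) : R :=
  (2 + alpha0 n p) * (INR n - 2) / (p - 1) ^ 2 * (p - (INR n + alpha0 n p) / (INR n - 2)).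

Definition wbar (n : nat) (p : R) (f : pt -> R) (t : R) : R :=
  exp (- delta0 n p * t) * kelvin n f (radpt (exp (- t))).

Definition Psibar (n : nat) (mu1 mu2 beta q : R) (w1 w2 dw1 dw2 : R -> R) (t : R) : R :=
  let p := 2 * q + 1 in
  / 2 * (dw1 t ^ 2 + dw2 t ^ 2 - sigma0 n p * (w1 t ^ 2 + w2 t ^ 2))
  + / (p + 1) * (mu1 * rpow (w1 t) (p + 1)
                 + 2 * beta * rpow (w1 t) (q + 1) * rpow (w2 t) (q + 1)
                 + mu2 * rpow (w2 t) (p + 1)).

(* Main.v *)
Require Import Defs.
From Stdlib Require Import Reals Lra Lia FunctionalExtensionality.
Open Scope R_scope.

Notation dpl := derivable_pt_lim.

Lemma dval f x l l' : l = l' -> dpl f x l -> dpl f x l'.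
Proof. intros ->; auto. Qed.
Lemma dv f x l' l : dpl f x l -> l = l' -> dpl f x l'.
Proof. intros H ->; auto. Qed.
Lemma dext f g x l : (forall y, f y = g y) -> dpl f x l -> dpl g x l.
Proof. intros H; replace g with f; auto. apply functional_extensionality; auto. Qed.
Lemma dplus f g x a b : dpl f x a -> dpl g x b -> dpl (fun y => f y + g y) x (a + b).
Proof. intros; exact (derivable_pt_lim_plus f g x a b H H0). Qed.
Lemma dminus f g x a b : dpl f x a -> dpl g x b -> dpl (fun y => f y - g y) x (a - b).
Proof. intros; exact (derivable_pt_lim_minus f g x a b H H0). Qed.
Lemma dmul f g x a b : dpl f x a -> dpl g x b -> dpl (fun y => f y * g y) x (a * g x + f x * b).
Proof. intros; exact (derivable_pt_lim_mult f g x a b H H0). Qed.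
Lemma dconst c x : dpl (fun _ => c) x 0.
Proof. exact (derivable_pt_lim_const c x). Qed.
Lemma did x : dpl (fun y => y) x 1.
Proof. exact (derivable_pt_lim_id x). Qed.
Lemma dcomp f g x a b : dpl f x a -> dpl g (f x) b -> dpl (fun y => g (f y)) x (b * a).
Proof. intros; exact (derivable_pt_lim_comp f g x a b H H0). Qed.
Lemma dexp x : dpl exp x (exp x).
Proof. exact (derivable_pt_lim_exp x). Qed.
Lemma dscal c f x a : dpl f x a -> dpl (fun y => c * f y) x (c * a).
Proof. intros. eapply dv; [apply dmul; [apply dconst|exact H]|]. cbv beta; ring. Qed.
Lemma dsq f x a : dpl f x a -> dpl (fun y => f y ^ 2) x (2 * f x * a).
Proof. intros. eapply dext with (f := fun y => f y * f y). intros; cbv beta; ring.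
  eapply dv; [apply dmul; eauto|]. cbv beta; ring. Qed.
Lemma dshift f r l : dpl (fun t => f (r + t)) 0 l -> dpl f r l.
Proof. intros H eps He. destruct (H eps He) as [d Hd]. exists d. intros h H1 H2.
  specialize (Hd h H1 H2). rewrite Rplus_0_l, Rplus_0_r in Hd. exact Hd. Qed.

Lemma rpow_pos x a : 0 < x -> rpow x a = Rpower x a.
Proof. intros; unfold rpow; destruct (Rle_dec x 0); [lra|auto]. Qed.
Lemma rpow_npos x a : x <= 0 -> rpow x a = 0.
Proof. intros; unfold rpow; destruct (Rle_dec x 0); [auto|lra]. Qed.
Lemma rpow_ge0 x a : 0 <= rpow x a.
Proof. unfold rpow; destruct (Rle_dec x 0); [lra|]. unfold Rpower; left; apply exp_pos. Qed.

Lemma drpow c x : 1 < c -> dpl (fun y => rpow y c) x (c * rpow x (c - 1)).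
Proof.
  intros Hc. destruct (Rtotal_order x 0) as [Hx|[Hx|Hx]].
  - intros eps He. assert (P : 0 < - x) by lra. exists (mkposreal _ P). simpl.
    intros h H1 H2. rewrite !rpow_npos; try lra.
    + replace ((0 - 0) / h - c * 0) with 0 by (field; auto). rewrite Rabs_R0. lra.
    + apply Rabs_def2 in H2. lra.
  - subst x. intros eps He.
    assert (P : 0 < Rpower eps (/ (c - 1))) by (unfold Rpower; apply exp_pos).
    exists (mkposreal _ P). simpl. intros h H1 H2.
    rewrite (rpow_npos 0 c) by lra. rewrite (rpow_npos 0 (c-1)) by lra. rewrite Rplus_0_l.
    destruct (Rle_dec h 0) as [Hh|Hh].
    + rewrite rpow_npos by lra. replace ((0 - 0) / h - c * 0) with 0 by (field; auto). rewrite Rabs_R0. lra.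
    + assert (hp : 0 < h) by lra. rewrite rpow_pos by lra.
      replace ((Rpower h c - 0) / h - c * 0) with (Rpower h (c - 1)).
      2:{ replace c with ((c - 1) + 1) at 2 by ring. rewrite Rpower_plus, Rpower_1 by lra. field. lra. }
      rewrite Rabs_right by (left; unfold Rpower; apply exp_pos).
      rewrite Rabs_right in H2 by lra.
      replace eps with (Rpower (Rpower eps (/ (c - 1))) (c - 1)).
      2:{ rewrite Rpower_mult. replace (/ (c - 1) * (c - 1)) with 1 by (field; lra). apply Rpower_1; lra. }
      apply Rlt_Rpower_l; lra.
  - intros eps He. destruct (derivable_pt_lim_power x c Hx eps He) as [d Hd].
    assert (P : 0 < Rmin d x) by (apply Rmin_pos; [apply cond_pos|lra]).
    exists (mkposreal _ P). simpl. intros h H1 H2.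
    assert (h < x) by (apply Rabs_def2 in H2; pose proof (Rmin_r d x); lra).
    assert (-x < h) by (apply Rabs_def2 in H2; pose proof (Rmin_r d x); lra).
    rewrite !rpow_pos by lra. apply Hd; auto. pose proof (Rmin_l d x); lra.
Qed.
Lemma ddiv f g x a b : dpl f x a -> dpl g x b -> g x <> 0 ->
  dpl (fun y => f y / g y) x ((a * g x - b * f x) / (g x)²).
Proof. intros; exact (derivable_pt_lim_div f g x a b H H0 H1). Qed.

Lemma sum_shift_aux r i s : (1 <= i)%nat -> forall m,
  sumR m (fun k => shift (radpt r) i s k ^ 2) =
  (if Nat.ltb 0 m then r ^ 2 else 0) + (if Nat.ltb i m then s ^ 2 else 0).
Proof.
  intros Hi m. induction m as [|m IH].
  - simpl. ring.
  - change (sumR (S m) ?F) with (sumR m F + F m). rewrite IH. cbv beta. unfold shift, radpt.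
    destruct (Nat.eqb_spec m i); destruct (Nat.eqb_spec m 0);
    destruct (Nat.ltb_spec 0 m), (Nat.ltb_spec 0 (S m)), (Nat.ltb_spec i m), (Nat.ltb_spec i (S m));
    try lia; ring.
Qed.

Lemma nrm_shift n r i s : (1 <= i)%nat -> (i < n)%nat ->
  nrm n (shift (radpt r) i s) = sqrt (r ^ 2 + s ^ 2).
Proof.
  intros H1 H2. unfold nrm. rewrite sum_shift_aux by auto.
  destruct (Nat.ltb_spec 0 n), (Nat.ltb_spec i n); try lia; reflexivity.
Qed.

Lemma radpt_shift r : radpt r = shift (radpt r) 1 0.
Proof. apply functional_extensionality; intro k. unfold shift. destruct (Nat.eqb k 1); ring. Qed.

Lemma nrm_radpt n r : (2 <= n)%nat -> 0 <= r -> nrm n (radpt r) = r.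
Proof.
  intros Hn Hr. rewrite radpt_shift, nrm_shift by lia.
  replace (r ^ 2 + 0 ^ 2) with (r ^ 2) by ring. apply sqrt_pow2; auto.
Qed.

Lemma radpt_in n r : (1 <= n)%nat -> inRn n (radpt r).
Proof. intros Hn k Hk. unfold radpt. destruct (Nat.eqb_spec k 0); [lia|auto]. Qed.

Lemma shift_in n x i t : inRn n x -> (i < n)%nat -> inRn n (shift x i t).
Proof. intros Hx Hi k Hk. unfold shift. destruct (Nat.eqb_spec k i); [lia|auto]. Qed.

Lemma shift0 r t : shift (radpt r) 0 t = radpt (r + t).
Proof. apply functional_extensionality; intro k. unfold shift, radpt. destruct (Nat.eqb k 0); ring. Qed.

Lemma shift_shift x i s t : shift (shift x i s) i t = shift x i (s + t).
Proof. apply functional_extensionality; intro k. unfold shift. destruct (Nat.eqb k i); ring. Qed.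

Lemma prof n u D1 D2 : (3 <= n)%nat -> C2_punct n u D1 D2 -> radial n u ->
  forall r, 0 < r ->
   dpl (fun s => u (radpt s)) r (D1 0%nat (radpt r)) /\
   dpl (fun s => D1 0%nat (radpt s)) r (D2 0%nat 0%nat (radpt r)) /\
   sumR n (fun i => D2 i i (radpt r)) = D2 0%nat 0%nat (radpt r) + (INR n - 1) * (D1 0%nat (radpt r) / r).
Proof.
  intros Hn HC Hr.
  assert (Hd : forall r, 0 < r ->
    dpl (fun s => u (radpt s)) r (D1 0%nat (radpt r)) /\
    dpl (fun s => D1 0%nat (radpt s)) r (D2 0%nat 0%nat (radpt r))).
  { intros r Hr0.
    destruct (HC (radpt r)) as [_ HC2]; [apply radpt_in; lia| rewrite nrm_radpt by (lia||lra); lra|].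
    destruct (HC2 0%nat ltac:(lia)) as [Hp [_ Hj]]. destruct (Hj 0%nat ltac:(lia)) as [Hp2 _].
    unfold partial_lim in Hp, Hp2. split; apply dshift.
    - eapply dext; [|exact Hp]. intro t. cbv beta. rewrite shift0. auto.
    - eapply dext; [|exact Hp2]. intro t. cbv beta. rewrite shift0. auto. }
  intros r Hr0. destruct (Hd r Hr0) as [Hd1 Hd2]. split; [auto|split; [auto|]].
  set (Phi1 := fun s => D1 0%nat (radpt s)).
  assert (Hi : forall i, (1 <= i)%nat -> (i < n)%nat -> D2 i i (radpt r) = Phi1 r / r).
  { intros i Hi1 Hi2.
    set (rho := fun s => sqrt (r ^ 2 + s ^ 2)).
    assert (Hrho : forall s, 0 < rho s).
    { intro s. unfold rho. apply sqrt_lt_R0. nra. }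
    assert (Hrad : forall s, u (shift (radpt r) i s) = u (radpt (rho s))).
    { intro s. apply Hr.
      - apply shift_in; [apply radpt_in; lia| lia].
      - apply radpt_in; lia.
      - rewrite nrm_shift by lia. apply Hrho.
      - rewrite nrm_shift by lia. rewrite nrm_radpt by (try lia; left; apply Hrho). reflexivity. }
    assert (Hdrho : forall s, dpl (fun t => rho (s + t)) 0 (s / rho s)).
    { intro s. unfold rho.
      assert (Hs : 0 < r ^ 2 + (s + 0) ^ 2) by nra.
      eapply dv.
      - apply (dcomp (fun t => r ^ 2 + (s + t) ^ 2) sqrt).
        + apply dplus; [apply dconst|]. apply dsq. apply dplus; [apply dconst|apply did].
        + cbv beta. apply derivable_pt_lim_sqrt. exact Hs.
      - rewrite Rplus_0_r. field. apply Rgt_not_eq, sqrt_lt_R0. nra. }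
    assert (HA : forall s, D1 i (shift (radpt r) i s) = Phi1 (rho s) * (s / rho s)).
    { intro s.
      destruct (HC (shift (radpt r) i s)) as [_ HC2];
        [apply shift_in; [apply radpt_in; lia|lia] | rewrite nrm_shift by lia; apply Hrho |].
      destruct (HC2 i Hi2) as [Hp _]. unfold partial_lim in Hp.
      apply (uniqueness_limite _ _ _ _ Hp).
      eapply dext with (f := fun t => u (radpt (rho (s + t)))).
      { intro t. cbv beta. rewrite shift_shift. rewrite Hrad. reflexivity. }
      apply (dcomp (fun t => rho (s + t)) (fun x => u (radpt x))); [apply Hdrho|].
      cbv beta. rewrite Rplus_0_r. apply (Hd (rho s) (Hrho s)). }
    destruct (HC (radpt r)) as [_ HC2]; [apply radpt_in; lia| rewrite nrm_radpt by (lia||lra); lra|].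
    destruct (HC2 i Hi2) as [_ [_ Hj]]. destruct (Hj i Hi2) as [Hp2 _]. unfold partial_lim in Hp2.
    apply (uniqueness_limite _ _ _ _ Hp2).
    eapply dext with (f := fun t => Phi1 (rho t) * (t / rho t)).
    { intro t. cbv beta. rewrite HA. reflexivity. }
    assert (Hr0' : rho 0 = r).
    { unfold rho. replace (r ^ 2 + 0 ^ 2) with (r ^ 2) by ring. apply sqrt_pow2; lra. }
    assert (Hdr0 : dpl rho 0 0).
    { eapply dext; [|eapply dv; [apply (Hdrho 0)|]]. intro t; cbv beta; rewrite Rplus_0_l; auto.
      unfold Rdiv; ring. }
    eapply dv.
    - apply dmul.
      + apply (dcomp rho Phi1); [exact Hdr0|]. rewrite Hr0'. exact Hd2.
      + apply ddiv; [apply did|exact Hdr0|]. rewrite Hr0'; lra.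
    - cbv beta. rewrite !Hr0'. unfold Rsqr. field. lra. }
  assert (Hs : forall m, (1 <= m)%nat -> (m <= n)%nat ->
     sumR m (fun i => D2 i i (radpt r)) = D2 0%nat 0%nat (radpt r) + INR (m - 1) * (Phi1 r / r)).
  { intros m H1 H2. induction m as [|m IH]; [lia|].
    change (sumR (S m) ?F) with (sumR m F + F m). cbv beta.
    destruct (Nat.eq_dec m 0) as [->|Hm].
    - simpl. ring.
    - rewrite IH by lia. rewrite (Hi m) by lia.
      replace (S m - 1)%nat with (S (m - 1)) by lia. rewrite S_INR. ring. }
  rewrite Hs by lia. rewrite minus_INR by lia. simpl (INR 1). reflexivity.
Qed.

Lemma mono_dec f f' a b : a <= b -> (forall c, a <= c <= b -> dpl f c (f' c)) ->
  (forall c, a <= c <= b -> f' c <= 0) -> f b <= f a.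
Proof.
  intros Hab Hd Hs. destruct (Req_dec a b) as [->|Hne]; [lra|].
  destruct (MVT_cor2 f f' a b ltac:(lra) Hd) as [c [Hc1 Hc2]].
  assert (f' c <= 0) by (apply Hs; lra). nra.
Qed.

Lemma mono_inc f f' a b : a <= b -> (forall c, a <= c <= b -> dpl f c (f' c)) ->
  (forall c, a <= c <= b -> 0 <= f' c) -> f a <= f b.
Proof.
  intros Hab Hd Hs. destruct (Req_dec a b) as [->|Hne]; [lra|].
  destruct (MVT_cor2 f f' a b ltac:(lra) Hd) as [c [Hc1 Hc2]].
  assert (0 <= f' c) by (apply Hs; lra). nra.
Qed.

Lemma rpow_mono x y a : 0 < a -> 0 <= x <= y -> rpow x a <= rpow y a.
Proof.
  intros Ha [H1 H2]. destruct (Rle_dec x 0).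
  - rewrite (rpow_npos x) by auto. apply rpow_ge0.
  - rewrite !rpow_pos by lra. apply Rle_Rpower_l; lra.
Qed.

Lemma dinvpow k s : 0 < s ->
  dpl (fun s => / (INR (S k) * s ^ (S k))) s (- / s ^ (S (S k))).
Proof.
  intros Hs. assert (Hk : 0 < INR (S k)) by (apply lt_0_INR; lia).
  assert (Hp : 0 < s ^ k) by (apply pow_lt; auto).
  eapply dext with (f := fun s => 1 / (INR (S k) * s ^ (S k))).
  { intro y; cbv beta; unfold Rdiv; ring. }
  eapply dv.
  - apply ddiv; [apply dconst| apply dscal; apply derivable_pt_lim_pow |].
    cbv beta. simpl pow. apply Rgt_not_eq. apply Rmult_lt_0_compat; auto. nra.
  - cbv beta. simpl pred. simpl pow. unfold Rsqr. field. split; lra.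
Qed.

Lemma ode_bounds (k : nat) (mu p : R) (phi phi1 phi2 F : R -> R) :
  0 < mu -> 0 < p ->
  (forall r, 0 < r -> dpl phi r (phi1 r) /\ dpl phi1 r (phi2 r) /\ 0 <= phi r /\
     phi2 r + (INR (S k) + 1) * (phi1 r / r) = - F r /\ mu * rpow (phi r) p <= F r) ->
  forall r, 0 < r -> phi1 r <= 0 /\ 0 <= INR (S k) * phi r + r * phi1 r /\
     r ^ 2 * (mu * rpow (phi r) p) <= INR (S k) * 2 ^ (k + 3) * phi r.
Proof.
  intros Hmu Hp H.
  set (g := fun r => r ^ (S (S k)) * phi1 r).
  assert (Hg : forall r, 0 < r -> dpl g r (- (r ^ (S (S k)) * F r))).
  { intros r Hr. destruct (H r Hr) as [H1 [H2 [H3 [H4 H5]]]].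
    unfold g. eapply dv. apply dmul; [apply derivable_pt_lim_pow|exact H2].
    simpl pred. replace (F r) with (-(phi2 r + (INR (S k)+1)*(phi1 r / r))) by lra.
    rewrite !S_INR. simpl pow. field. lra. }
  assert (HF0 : forall c, 0 < c -> 0 <= F c).
  { intros c Hc. destruct (H c Hc) as [_ [_ [_ [_ H5]]]].
    assert (0 <= mu * rpow (phi c) p) by (apply Rmult_le_pos; [lra|apply rpow_ge0]). lra. }
  assert (Hgdec : forall a b, 0 < a -> a <= b -> g b <= g a).
  { intros a b Ha Hab. apply (mono_dec g (fun r => - (r ^ (S (S k)) * F r))); auto.
    - intros c Hc; apply Hg; lra.
    - intros c Hc. assert (0 <= F c) by (apply HF0; lra).
      assert (0 < c ^ S (S k)) by (apply pow_lt; lra). nra. }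
  set (L := fun s => / (INR (S k) * s ^ (S k))).
  assert (HL : forall s, 0 < s -> dpl L s (- / s ^ (S (S k)))) by (intros; apply dinvpow; auto).
  assert (Hk : 0 < INR (S k)) by (apply lt_0_INR; lia).
  assert (Hgneg : forall r, 0 < r -> g r <= 0).
  { intros r1 Hr1. destruct (Rle_dec (g r1) 0) as [|Hc]; [auto|exfalso].
    set (c := g r1).
    set (Hf := fun s => phi s + c * L s).
    assert (HH : forall s, 0 < s -> s <= r1 -> Hf s <= Hf r1).
    { intros s Hs Hsr. apply (mono_inc Hf (fun s => phi1 s + c * (- / s ^ (S (S k))))); auto.
      - intros y Hy. unfold Hf. apply dplus. apply (H y ltac:(lra)). apply dscal. apply HL; lra.
      - intros y Hy. assert (g r1 <= g y) by (apply Hgdec; lra).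
        assert (0 < y ^ S (S k)) by (apply pow_lt; lra).
        apply Rmult_le_reg_l with (y ^ S (S k)); auto. rewrite Rmult_0_r.
        replace (y ^ S (S k) * (phi1 y + c * - / y ^ S (S k))) with (y ^ S (S k) * phi1 y - c) by (field; lra).
        unfold c, g in *; lra. }
    assert (Hcp : 0 < c) by (unfold c; lra).
    set (A := Rabs (Hf r1) + 1).
    assert (HA : 0 < A) by (unfold A; pose proof (Rabs_pos (Hf r1)); lra).
    assert (Hc0 : 0 < c / (INR (S k) * A)) by (apply Rdiv_lt_0_compat; [lra| nra]).
    set (s := Rmin (Rmin r1 1) (c / (INR (S k) * A)) / 2).
    assert (Hs0 : 0 < s).
    { unfold s. assert (0 < Rmin (Rmin r1 1) (c / (INR (S k) * A))) by (apply Rmin_pos; [apply Rmin_pos|]; lra). lra. }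
    assert (Hs1 : s <= r1 /\ s <= 1 /\ s < c / (INR (S k) * A)).
    { unfold s. pose proof (Rmin_l (Rmin r1 1) (c / (INR (S k) * A))).
      pose proof (Rmin_r (Rmin r1 1) (c / (INR (S k) * A))).
      pose proof (Rmin_l r1 1). pose proof (Rmin_r r1 1). lra. }
    destruct Hs1 as [Hs1 [Hs2 Hs3]].
    specialize (HH s Hs0 Hs1).
    assert (Hphi : 0 <= phi s) by (apply (H s Hs0)).
    assert (Hpk : s ^ k <= 1) by (rewrite <- (pow1 k); apply pow_incr; lra).
    assert (Hpk0 : 0 < s ^ k) by (apply pow_lt; lra).
    assert (HLs : / (INR (S k) * s) <= L s).
    { unfold L. change (s ^ S k) with (s * s ^ k). apply Rinv_le_contravar.
      apply Rmult_lt_0_compat; nra. apply Rmult_le_compat_l; nra. }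
    assert (Hb : A < c * / (INR (S k) * s)).
    { apply Rmult_lt_reg_r with (INR (S k) * s). nra.
      rewrite Rmult_assoc, Rinv_l by nra. rewrite Rmult_1_r.
      apply Rmult_lt_compat_r with (r := INR (S k) * A) in Hs3; [|nra].
      unfold Rdiv in Hs3. rewrite Rmult_assoc, Rinv_l in Hs3 by nra. nra. }
    assert (Hr1A : Hf r1 < A) by (unfold A; pose proof (Rle_abs (Hf r1)); lra).
    assert (HH2 : phi s + c * L s <= Hf r1) by exact HH. assert (c * / (INR (S k) * s) <= c * L s) by (apply Rmult_le_compat_l; lra).
    lra. }
  assert (Hphi1 : forall r, 0 < r -> phi1 r <= 0).
  { intros r Hr. specialize (Hgneg r Hr). unfold g in Hgneg.
    assert (0 < r ^ S (S k)) by (apply pow_lt; lra). nra. }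
  assert (Hcc : forall r, 0 < r -> 0 <= INR (S k) * phi r + r * phi1 r).
  { intros r Hr. apply Rnot_lt_le. intro Hlt.
    set (X := INR (S k) * phi r + r * phi1 r) in *.
    set (eps := - X / (2 * INR (S k))).
    assert (He : 0 < eps) by (unfold eps; apply Rdiv_lt_0_compat; lra).
    set (K := fun s => phi s + g r * L s).
    assert (HK : forall Sb, r <= Sb -> K Sb <= K r).
    { intros Sb HS. apply (mono_dec K (fun s => phi1 s + g r * (- / s ^ (S (S k))))); auto.
      - intros y Hy. unfold K. apply dplus. apply (H y ltac:(lra)). apply dscal. apply HL; lra.
      - intros y Hy. assert (g y <= g r) by (apply Hgdec; lra).
        assert (0 < y ^ S (S k)) by (apply pow_lt; lra).
        apply Rmult_le_reg_l with (y ^ S (S k)); auto. rewrite Rmult_0_r.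
        replace (y ^ S (S k) * (phi1 y + g r * - / y ^ S (S k))) with (y ^ S (S k) * phi1 y - g r) by (field; lra).
        unfold g in *; lra. }
    assert (Hgr : g r <= 0) by (apply Hgneg; auto).
    set (Sb := Rmax r 1 + (- g r) / (INR (S k) * eps)).
    assert (HS1 : r <= Sb /\ 1 <= Sb /\ - g r <= INR (S k) * eps * Sb).
    { assert (0 <= (- g r) / (INR (S k) * eps)) by (apply Rmult_le_pos; [lra| left; apply Rinv_0_lt_compat; nra]).
      pose proof (Rmax_l r 1). pose proof (Rmax_r r 1). unfold Sb. split; [lra|split;[lra|]].
      assert (INR (S k) * eps * ((- g r) / (INR (S k) * eps)) = - g r) by (field; lra).
      assert (0 <= INR (S k) * eps * Rmax r 1) by (apply Rmult_le_pos; [apply Rmult_le_pos|]; lra).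
      rewrite Rmult_plus_distr_l. lra. }
    destruct HS1 as [HS1 [HS2 HS3]].
    specialize (HK Sb HS1).
    assert (Hpk : 1 <= Sb ^ k) by (rewrite <- (pow1 k); apply pow_incr; lra).
    assert (HLS : L Sb <= / (INR (S k) * Sb)).
    { unfold L. change (Sb ^ S k) with (Sb * Sb ^ k). apply Rinv_le_contravar.
      apply Rmult_lt_0_compat; nra. apply Rmult_le_compat_l; nra. }
    assert (HKS : - eps <= K Sb).
    { unfold K. assert (0 <= phi Sb) by (apply (H Sb ltac:(lra))).
      assert (g r * / (INR (S k) * Sb) <= g r * L Sb) by (apply Rmult_le_compat_neg_l; lra).
      assert (- eps <= g r * / (INR (S k) * Sb)).
      { apply Rmult_le_reg_r with (INR (S k) * Sb). nra.
        rewrite Rmult_assoc, Rinv_l by nra. nra. }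
      lra. }
    assert (HKr : K r = phi r + r * phi1 r / INR (S k)).
    { assert (0 < r ^ k) by (apply pow_lt; lra). unfold K, L, g. simpl pow. field. repeat split; lra. }
    assert (X / INR (S k) >= - eps).
    { replace (X / INR (S k)) with (K r) by (rewrite HKr; unfold X; field; lra). lra. }
    assert (X / INR (S k) = -2 * eps) by (unfold eps; field; lra).
    lra. }
  intros r Hr. split; [auto| split; [auto|]].
  destruct (MVT_cor2 g (fun r => -(r ^ (S (S k)) * F r)) (r / 2) r) as [xi [Hm [Hx1 Hx2]]];
    [lra| intros; apply Hg; lra |].
  assert (Hpx : phi r <= phi xi).
  { apply (mono_dec phi phi1 xi r); [lra| |].
    - intros c Hc; apply (H c ltac:(lra)).
    - intros c Hc; apply Hphi1; lra. }
  set (R0 := rpow (phi r) p).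
  assert (HR0 : 0 <= R0) by apply rpow_ge0.
  assert (A2 : mu * R0 <= F xi).
  { destruct (H xi ltac:(lra)) as [_ [_ [_ [_ H5]]]].
    assert (rpow (phi r) p <= rpow (phi xi) p) by (apply rpow_mono; [lra| split; [apply (H r Hr)|lra]]).
    unfold R0. nra. }
  assert (A1 : (r / 2) ^ S (S k) <= xi ^ S (S k)) by (apply pow_incr; lra).
  assert (A3 : (r / 2) ^ S (S k) * (mu * R0) <= xi ^ S (S k) * F xi).
  { apply Rmult_le_compat; auto. apply pow_le; lra. apply Rmult_le_pos; lra. }
  assert (A4 : g (r / 2) <= 0) by (apply Hgneg; lra).
  set (P := r ^ S k).
  assert (HP : 0 < P) by (apply pow_lt; lra).
  assert (A5 : - g r <= P * (INR (S k) * phi r)).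
  { assert (g r = P * (r * phi1 r)) by (unfold g, P; simpl pow; ring).
    assert (- (r * phi1 r) <= INR (S k) * phi r) by (pose proof (Hcc r Hr); lra).
    rewrite H0. nra. }
  assert (A6 : (r / 2) ^ S (S k) * (mu * R0) * (r / 2) <= P * (INR (S k) * phi r)).
  { assert (0 < r - r / 2) by lra. nra. }
  set (Q := 2 ^ (k + 3)).
  assert (HQ : 0 < Q) by (apply pow_lt; lra).
  assert (E1 : (r / 2) ^ S (S k) * (r / 2) = P * r ^ 2 / Q).
  { unfold P, Q. unfold Rdiv. rewrite Rpow_mult_distr, pow_inv.
    replace (k + 3)%nat with (S (S (S k))) by lia.
    assert (0 < 2 ^ k) by (apply pow_lt; lra). simpl pow. field. lra. }
  assert (Hmain : P * (r ^ 2 * (mu * R0)) <= P * (INR (S k) * Q * phi r)).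
  { replace (P * (r ^ 2 * (mu * R0))) with (Q * ((r / 2) ^ S (S k) * (r / 2) * (mu * R0))).
    2:{ rewrite E1. field. lra. }
    replace (P * (INR (S k) * Q * phi r)) with (Q * (P * (INR (S k) * phi r))) by ring.
    apply Rmult_le_compat_l; lra. }
  apply Rmult_le_reg_l with P; auto.
Qed.

Definition Wf (a : R) (phi : R -> R) (t : R) := exp (a * t) * phi (exp t).
Definition dWf (a : R) (phi phi1 : R -> R) (t : R) :=
  exp (a * t) * (a * phi (exp t) + exp t * phi1 (exp t)).
Definition ddWf (a : R) (phi phi1 phi2 : R -> R) (t : R) :=
  exp (a * t) * (a ^ 2 * phi (exp t) + (2 * a + 1) * (exp t * phi1 (exp t))
                 + exp t * exp t * phi2 (exp t)).

Lemma dexpa a t : dpl (fun t => exp (a * t)) t (a * exp (a * t)).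
Proof.
  eapply dv. apply (dcomp (fun t => a * t) exp). apply dscal, did. apply dexp.
  cbv beta. ring.
Qed.

Lemma Wf_deriv a phi phi1 phi2 :
  (forall r, 0 < r -> dpl phi r (phi1 r) /\ dpl phi1 r (phi2 r)) ->
  forall t, dpl (Wf a phi) t (dWf a phi phi1 t) /\ dpl (dWf a phi phi1) t (ddWf a phi phi1 phi2 t).
Proof.
  intros H t. assert (Ht : 0 < exp t) by apply exp_pos.
  destruct (H _ Ht) as [H1 H2]. split.
  - unfold Wf, dWf. eapply dv.
    + apply dmul. apply dexpa. apply (dcomp exp phi). apply dexp. exact H1.
    + cbv beta; ring.
  - unfold dWf, ddWf. eapply dv.
    + apply dmul. apply dexpa. apply dplus. apply dscal. apply (dcomp exp phi). apply dexp. exact H1.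
      apply dmul. apply dexp. apply (dcomp exp phi1). apply dexp. exact H2.
    + cbv beta. ring.
Qed.

Lemma rpow_exp y x c : rpow (exp y * x) c = exp (c * y) * rpow x c.
Proof.
  destruct (Rle_dec x 0) as [H|H].
  - rewrite !rpow_npos; [ring|lra|]. pose proof (exp_pos y). nra.
  - assert (0 < x) by lra. assert (0 < exp y * x) by (pose proof (exp_pos y); nra).
    rewrite !rpow_pos by auto. unfold Rpower. rewrite ln_mult, ln_exp by (auto; apply exp_pos).
    rewrite <- exp_plus. f_equal. ring.
Qed.

Lemma wbar_eq n p f : (3 <= n)%nat -> 1 < p ->
  wbar n p f = Wf (2 / (p - 1)) (fun s => f (radpt s)).
Proof.
  intros Hn Hp. apply functional_extensionality; intro t.
  unfold wbar, kelvin, Wf.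
  assert (He : 0 < exp (- t)) by apply exp_pos.
  rewrite nrm_radpt by (lia || lra).
  replace (fun k => radpt (exp (- t)) k / exp (- t) ^ 2) with (radpt (exp t)).
  2:{ apply functional_extensionality; intro k. unfold radpt. rewrite exp_Ropp.
      assert (0 < exp t) by apply exp_pos.
      destruct (Nat.eqb k 0); field; lra. }
  unfold Rpower. rewrite ln_exp. rewrite <- Rmult_assoc, <- exp_plus. f_equal. f_equal.
  unfold delta0, alpha0. field. lra.
Qed.

Lemma wbound w p C : 1 < p -> 0 < C -> 0 <= w -> rpow w p <= C * w -> w <= Rpower C (/ (p - 1)).
Proof.
  intros Hp HC Hw H. assert (HB : 0 < Rpower C (/ (p - 1))) by (unfold Rpower; apply exp_pos).
  destruct (Req_dec w 0) as [->|Hne]; [lra|].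
  assert (Hw' : 0 < w) by lra. rewrite rpow_pos in H by auto.
  replace p with ((p - 1) + 1) in H by ring. rewrite Rpower_plus, Rpower_1 in H by auto.
  assert (Rpower w (p - 1) <= C) by (apply Rmult_le_reg_r with w; auto; lra).
  apply Rnot_lt_le; intro Hlt.
  assert (Rpower (Rpower C (/ (p - 1))) (p - 1) < Rpower w (p - 1)) by (apply Rlt_Rpower_l; lra).
  rewrite Rpower_mult in H1. replace (/ (p - 1) * (p - 1)) with 1 in H1 by (field; lra).
  rewrite Rpower_1 in H1 by auto. lra.
Qed.

Lemma component (n k : nat) (mu p : R) (u : pt -> R) D1 D2 (F : R -> R) :
  n = S (S (S k)) -> 1 < p -> 0 < mu ->
  C2_punct n u D1 D2 -> radial n u ->
  (forall x, inRn n x -> 0 < nrm n x -> 0 <= u x) ->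
  (forall r, 0 < r -> - sumR n (fun i => D2 i i (radpt r)) = F r /\ mu * rpow (u (radpt r)) p <= F r) ->
  (forall t, dpl (Wf (2 / (p - 1)) (fun s => u (radpt s))) t
                 (dWf (2 / (p - 1)) (fun s => u (radpt s)) (fun s => D1 0%nat (radpt s)) t) /\
             dpl (dWf (2 / (p - 1)) (fun s => u (radpt s)) (fun s => D1 0%nat (radpt s))) t
                 (ddWf (2 / (p - 1)) (fun s => u (radpt s)) (fun s => D1 0%nat (radpt s))
                       (fun s => D2 0%nat 0%nat (radpt s)) t)) /\
  (forall t, ddWf (2 / (p - 1)) (fun s => u (radpt s)) (fun s => D1 0%nat (radpt s))
                       (fun s => D2 0%nat 0%nat (radpt s)) t
             + tau0 n p * dWf (2 / (p - 1)) (fun s => u (radpt s)) (fun s => D1 0%nat (radpt s)) t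
             - sigma0 n p * Wf (2 / (p - 1)) (fun s => u (radpt s)) t
             + exp (2 / (p - 1) * t) * exp t * exp t * F (exp t) = 0) /\
  (exists B D, forall t, 0 <= Wf (2 / (p - 1)) (fun s => u (radpt s)) t <= B /\
       Rabs (dWf (2 / (p - 1)) (fun s => u (radpt s)) (fun s => D1 0%nat (radpt s)) t) <= D).
Proof.
  intros Hnk Hp Hmu HC Hr Hu HF.
  assert (Hn3 : (3 <= n)%nat) by lia.
  assert (HN : INR n = INR (S k) + 2) by (rewrite Hnk, !S_INR; ring).
  assert (Hk : 0 < INR (S k)) by (apply lt_0_INR; lia).
  pose proof (prof n u D1 D2 Hn3 HC Hr) as Hpr.
  set (a := 2 / (p - 1)).
  assert (Ha : 0 < a) by (unfold a; apply Rdiv_lt_0_compat; lra).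
  set (phi := fun s => u (radpt s)).
  set (phi1 := fun s => D1 0%nat (radpt s)).
  set (phi2 := fun s => D2 0%nat 0%nat (radpt s)).
  assert (Hphi0 : forall r, 0 < r -> 0 <= phi r).
  { intros r H. apply Hu. apply radpt_in; lia. rewrite nrm_radpt by (lia||lra). auto. }
  assert (Heq : forall r, 0 < r -> phi2 r = - F r - (INR n - 1) * (phi1 r / r)).
  { intros r H. destruct (Hpr r H) as [_ [_ Hs]]. destruct (HF r H) as [HF1 _].
    unfold phi1, phi2. rewrite <- HF1, Hs. ring. }
  split; [|split].
  - apply Wf_deriv. intros r H. destruct (Hpr r H) as [H1 [H2 _]]. auto.
  - intro t. assert (Hr0 : 0 < exp t) by apply exp_pos.
    unfold ddWf, dWf, Wf. fold phi phi1 phi2. rewrite (Heq _ Hr0).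
    unfold tau0, sigma0, alpha0. unfold a. field. split; lra.
  - assert (Hb : forall r, 0 < r -> phi1 r <= 0 /\ 0 <= INR (S k) * phi r + r * phi1 r /\
       r ^ 2 * (mu * rpow (phi r) p) <= INR (S k) * 2 ^ (k + 3) * phi r).
    { apply (ode_bounds k mu p phi phi1 phi2 F); try lra.
      intros r H. destruct (Hpr r H) as [H1 [H2 _]]. destruct (HF r H) as [_ HF2].
      repeat split; auto. rewrite (Heq r H). rewrite HN. ring. }
    set (C := INR (S k) * 2 ^ (k + 3) / mu).
    assert (HC0 : 0 < C) by (unfold C; apply Rdiv_lt_0_compat; [apply Rmult_lt_0_compat; [lra|apply pow_lt; lra]|lra]).
    set (B := Rpower C (/ (p - 1))).
    exists B, ((a + INR (S k)) * B). intro t.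
    assert (Hr0 : 0 < exp t) by apply exp_pos.
    assert (HE : 0 < exp (a * t)) by apply exp_pos.
    destruct (Hb _ Hr0) as [Hb1 [Hb2 Hb3]]. pose proof (Hphi0 _ Hr0) as Hp0.
    assert (Hw0 : 0 <= Wf a phi t) by (unfold Wf; nra).
    assert (HwB : Wf a phi t <= B).
    { apply wbound; auto. unfold Wf. rewrite rpow_exp.
      replace (p * (a * t)) with (a * t + t + t) by (unfold a; field; lra).
      rewrite !exp_plus.
      assert (rpow (phi (exp t)) p * mu * exp t ^ 2 <= INR (S k) * 2 ^ (k + 3) * phi (exp t)) by nra.
      assert (rpow (phi (exp t)) p * exp t ^ 2 <= C * phi (exp t)).
      { unfold C. apply Rmult_le_reg_r with mu; auto. unfold Rdiv.
        replace (INR (S k) * 2 ^ (k + 3) * / mu * phi (exp t) * mu) with (INR (S k) * 2 ^ (k + 3) * phi (exp t)) by (field; lra).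
        nra. }
      simpl in H0. nra. }
    split; [split; auto|].
    unfold dWf. unfold Wf in Hw0, HwB.
    assert (HX : exp t * phi1 (exp t) <= 0).
    { pose proof (Rmult_le_compat_l (exp t) _ _ (Rlt_le _ _ Hr0) Hb1). lra. }
    clear Hb3 Heq Hpr HF Hb.
    set (E := exp (a * t)) in *. set (X := exp t * phi1 (exp t)) in *.
    assert (H1 : E * X <= 0).
    { pose proof (Rmult_le_compat_l E _ _ (Rlt_le _ _ HE) HX). lra. }
    assert (H2 : - (INR (S k) * (E * phi (exp t))) <= E * X).
    { assert (- (INR (S k) * phi (exp t)) <= X) by lra.
      pose proof (Rmult_le_compat_l E _ _ (Rlt_le _ _ HE) H). lra. }
    assert (H3 : a * (E * phi (exp t)) <= a * B) by nra.
    assert (H4 : INR (S k) * (E * phi (exp t)) <= INR (S k) * B) by nra.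
    assert (H5 : 0 <= a * (E * phi (exp t))) by nra.
    apply Rabs_le. split; nra.
Qed.

Lemma drpowc w t d c : 1 < c -> dpl w t d -> dpl (fun t => rpow (w t) c) t (c * rpow (w t) (c - 1) * d).
Proof.
  intros Hc H. eapply dv; [apply (dcomp w (fun y => rpow y c)); [exact H| apply drpow; auto]|].
  cbv beta; ring.
Qed.

Theorem lemma4p5 (n : nat) (mu1 mu2 beta q : R) (u v : pt -> R) :
  (3 <= n)%nat ->
  0 < mu1 -> 0 < mu2 -> 0 < beta ->
  INR n / (INR n - 2) < 2 * q + 1 -> 2 * q + 1 < (INR n + 2) / (INR n - 2) ->
  sol_S n mu1 mu2 beta q u v -> radial n u -> radial n v ->
  let p := 2 * q + 1 in
  let w1 := wbar n p u in
  let w2 := wbar n p v in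
  exists dw1 ddw1 dw2 ddw2 : R -> R,
    (forall t, derivable_pt_lim w1 t (dw1 t) /\ derivable_pt_lim dw1 t (ddw1 t) /\
               derivable_pt_lim w2 t (dw2 t) /\ derivable_pt_lim dw2 t (ddw2 t)) /\
    (forall t,
       ddw1 t + tau0 n p * dw1 t - sigma0 n p * w1 t
         + mu1 * rpow (w1 t) (2 * q + 1) + beta * rpow (w1 t) q * rpow (w2 t) (q + 1) = 0 /\
       ddw2 t + tau0 n p * dw2 t - sigma0 n p * w2 t
         + mu2 * rpow (w2 t) (2 * q + 1) + beta * rpow (w2 t) q * rpow (w1 t) (q + 1) = 0) /\
    (forall s t, s <= t ->
       Psibar n mu1 mu2 beta q w1 w2 dw1 dw2 s <= Psibar n mu1 mu2 beta q w1 w2 dw1 dw2 t) /\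
    (exists M, forall t, Rabs (Psibar n mu1 mu2 beta q w1 w2 dw1 dw2 t) <= M) /\
    (forall t, derivable_pt_lim (Psibar n mu1 mu2 beta q w1 w2 dw1 dw2) t
                 (- tau0 n p * (dw1 t ^ 2 + dw2 t ^ 2))).
Proof.
  intros Hn Hmu1 Hmu2 Hb Hp1 Hp2 Hsol Hru Hrv. cbv zeta.
  destruct (Nat.le_exists_sub 3 n Hn) as [k0 [Hk0 _]].
  set (k := k0). assert (Hnk : n = S (S (S k))) by (unfold k; lia).
  assert (HN3 : 3 <= INR n) by (replace 3 with (INR 3) by (simpl; ring); apply le_INR; lia).
  assert (Hpgt : 1 < 2 * q + 1).
  { assert (INR n / (INR n - 2) = 1 + 2 / (INR n - 2)) by (field; lra).
    assert (0 < 2 / (INR n - 2)) by (apply Rdiv_lt_0_compat; lra). lra. }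
  assert (Htau : tau0 n (2 * q + 1) < 0).
  { assert (Hlt : (2 * q + 1) * (INR n - 2) < INR n + 2).
    { apply Rmult_lt_compat_r with (r := INR n - 2) in Hp2; [|lra].
      unfold Rdiv in Hp2. rewrite Rmult_assoc, Rinv_l in Hp2 by lra. lra. }
    replace (tau0 n (2 * q + 1)) with (((2 * q + 1) * (INR n - 2) - (INR n + 2)) / (2 * q + 1 - 1)).
    2:{ unfold tau0, alpha0. field. lra. }
    assert (0 < / (2 * q + 1 - 1)) by (apply Rinv_0_lt_compat; lra). unfold Rdiv. nra. }
  destruct Hsol as [Hnn [D1u [D2u [D1v [D2v [HCu [HCv Heqs]]]]]]].
  set (p := 2 * q + 1) in *.
  set (a := 2 / (p - 1)).
  set (phi := fun s => u (radpt s)). set (psi := fun s => v (radpt s)).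
  set (Fu := fun r => mu1 * rpow (phi r) p + beta * rpow (phi r) q * rpow (psi r) (q + 1)).
  set (Fv := fun r => mu2 * rpow (psi r) p + beta * rpow (psi r) q * rpow (phi r) (q + 1)).
  assert (Hrp : forall r, 0 < r -> inRn n (radpt r) /\ 0 < nrm n (radpt r)).
  { intros r H. split. apply radpt_in; lia. rewrite nrm_radpt by (lia||lra). auto. }
  pose proof (component n k mu1 p u D1u D2u Fu Hnk Hpgt Hmu1 HCu Hru
    (fun x H1 H2 => proj1 (Hnn x H1 H2))) as Cu.
  pose proof (component n k mu2 p v D1v D2v Fv Hnk Hpgt Hmu2 HCv Hrv
    (fun x H1 H2 => proj2 (Hnn x H1 H2))) as Cv.
  destruct Cu as [Du [Ou [Bu [DBu HBu]]]].
  { intros r H. destruct (Hrp r H) as [H1 H2]. destruct (Heqs _ H1 H2) as [E1 _].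
    split. rewrite E1. reflexivity.
    unfold Fu. assert (0 <= beta * rpow (phi r) q * rpow (psi r) (q + 1)).
    { apply Rmult_le_pos; [apply Rmult_le_pos; [lra|apply rpow_ge0]|apply rpow_ge0]. }
    unfold phi, psi in *; lra. }
  destruct Cv as [Dv [Ov [Bv [DBv HBv]]]].
  { intros r H. destruct (Hrp r H) as [H1 H2]. destruct (Heqs _ H1 H2) as [_ E2].
    split. rewrite E2. reflexivity.
    unfold Fv. assert (0 <= beta * rpow (psi r) q * rpow (phi r) (q + 1)).
    { apply Rmult_le_pos; [apply Rmult_le_pos; [lra|apply rpow_ge0]|apply rpow_ge0]. }
    unfold phi, psi in *; lra. }
  fold a phi psi in Du, Ou, HBu, Dv, Ov, HBv.
  rewrite !(wbar_eq n p) by (auto; lia). fold a phi psi.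
  set (phi1 := fun s => D1u 0%nat (radpt s)) in *. set (phi2 := fun s => D2u 0%nat 0%nat (radpt s)) in *.
  set (psi1 := fun s => D1v 0%nat (radpt s)) in *. set (psi2 := fun s => D2v 0%nat 0%nat (radpt s)) in *.
  exists (dWf a phi phi1), (ddWf a phi phi1 phi2), (dWf a psi psi1), (ddWf a psi psi1 psi2).
  assert (Hrw : forall t c, rpow (Wf a phi t) c = exp (c * (a * t)) * rpow (phi (exp t)) c /\
                            rpow (Wf a psi t) c = exp (c * (a * t)) * rpow (psi (exp t)) c).
  { intros t c. unfold Wf. split; apply rpow_exp. }
  assert (Hx1 : forall t, exp (p * (a * t)) = exp (a * t) * exp t * exp t).
  { intro t. rewrite <- !exp_plus. f_equal. unfold a. field. lra. }
  assert (Hx2 : forall t, exp (q * (a * t)) * exp ((q + 1) * (a * t)) = exp (a * t) * exp t * exp t).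
  { intro t. rewrite <- !exp_plus. f_equal. unfold a, p in *. field. lra. }
  assert (HODE : forall t,
       ddWf a phi phi1 phi2 t + tau0 n p * dWf a phi phi1 t - sigma0 n p * Wf a phi t
         + mu1 * rpow (Wf a phi t) p + beta * rpow (Wf a phi t) q * rpow (Wf a psi t) (q + 1) = 0 /\
       ddWf a psi psi1 psi2 t + tau0 n p * dWf a psi psi1 t - sigma0 n p * Wf a psi t
         + mu2 * rpow (Wf a psi t) p + beta * rpow (Wf a psi t) q * rpow (Wf a phi t) (q + 1) = 0).
  { intro t. specialize (Ou t). specialize (Ov t). unfold Fu, Fv in *.
    destruct (Hrw t p) as [R1 R2]. destruct (Hrw t q) as [R3 R4]. destruct (Hrw t (q + 1)) as [R5 R6].
    rewrite R1, R2, R3, R4, R5, R6, Hx1.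
    replace (beta * (exp (q * (a * t)) * rpow (phi (exp t)) q) * (exp ((q + 1) * (a * t)) * rpow (psi (exp t)) (q + 1)))
      with (beta * (exp (q * (a * t)) * exp ((q + 1) * (a * t))) * rpow (phi (exp t)) q * rpow (psi (exp t)) (q + 1)) by ring.
    replace (beta * (exp (q * (a * t)) * rpow (psi (exp t)) q) * (exp ((q + 1) * (a * t)) * rpow (phi (exp t)) (q + 1)))
      with (beta * (exp (q * (a * t)) * exp ((q + 1) * (a * t))) * rpow (psi (exp t)) q * rpow (phi (exp t)) (q + 1)) by ring.
    rewrite Hx2. split; lra. }
  assert (Hq : 0 < q) by (unfold p in Hpgt; lra).
  set (W1 := Wf a phi) in *. set (W2 := Wf a psi) in *.
  set (V1 := dWf a phi phi1) in *. set (V2 := dWf a psi psi1) in *.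
  set (A1 := ddWf a phi phi1 phi2) in *. set (A2 := ddWf a psi psi1 psi2) in *.
  assert (HdPsi : forall t, dpl (Psibar n mu1 mu2 beta q W1 W2 V1 V2) t (- tau0 n p * (V1 t ^ 2 + V2 t ^ 2))).
  { intro t. destruct (Du t) as [d1 d2]. destruct (Dv t) as [e1 e2]. destruct (HODE t) as [O1 O2].
    unfold Psibar. cbv zeta. fold p.
    eapply dv.
    - apply dplus.
      + apply dscal. apply dminus. apply dplus; apply dsq; eauto. apply dscal. apply dplus; apply dsq; eauto.
      + apply dscal. apply dplus. apply dplus.
        * apply dscal. apply drpowc; [unfold p; lra|exact d1].
        * apply dmul. apply dscal. apply drpowc; [lra|exact d1]. apply drpowc; [lra|exact e1].
        * apply dscal. apply drpowc; [unfold p; lra|exact e1].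
    - replace (p + 1 - 1) with p by ring. replace (q + 1 - 1) with q by ring.
      assert (HA1 : A1 t = - tau0 n p * V1 t + sigma0 n p * W1 t - mu1 * rpow (W1 t) p
                           - beta * rpow (W1 t) q * rpow (W2 t) (q + 1)) by lra.
      assert (HA2 : A2 t = - tau0 n p * V2 t + sigma0 n p * W2 t - mu2 * rpow (W2 t) p
                           - beta * rpow (W2 t) q * rpow (W1 t) (q + 1)) by lra.
      rewrite HA1, HA2. unfold p. field. lra. }
  split; [|split; [|split; [|split]]].
  - intro t. destruct (Du t), (Dv t). auto.
  - exact HODE.
  - intros s t Hst. apply (mono_inc _ (fun t => - tau0 n p * (V1 t ^ 2 + V2 t ^ 2))); auto.
    intros c _. apply Rmult_le_pos; [lra|]. pose proof (pow2_ge_0 (V1 c)). pose proof (pow2_ge_0 (V2 c)). lra.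
  - set (B := Rmax Bu Bv). set (D := Rmax DBu DBv).
    set (MX := 2 * D ^ 2 + Rabs (sigma0 n p) * (2 * B ^ 2)).
    set (MY := mu1 * rpow B (p + 1) + 2 * beta * rpow B (q + 1) * rpow B (q + 1) + mu2 * rpow B (p + 1)).
    exists (/ 2 * MX + / (p + 1) * MY). intro t.
    destruct (HBu t) as [[Hw1a Hw1b] Hv1]. destruct (HBv t) as [[Hw2a Hw2b] Hv2].
    assert (HB1 : W1 t <= B) by (unfold B; pose proof (Rmax_l Bu Bv); lra).
    assert (HB2 : W2 t <= B) by (unfold B; pose proof (Rmax_r Bu Bv); lra).
    assert (HD1 : Rabs (V1 t) <= D) by (unfold D; pose proof (Rmax_l DBu DBv); lra).
    assert (HD2 : Rabs (V2 t) <= D) by (unfold D; pose proof (Rmax_r DBu DBv); lra).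
    assert (Hsq : forall x y, 0 <= x <= y -> x ^ 2 <= y ^ 2) by (intros; apply pow_incr; auto).
    assert (S1 : V1 t ^ 2 <= D ^ 2) by (rewrite <- (pow2_abs (V1 t)); apply Hsq; split; [apply Rabs_pos|auto]).
    assert (S2 : V2 t ^ 2 <= D ^ 2) by (rewrite <- (pow2_abs (V2 t)); apply Hsq; split; [apply Rabs_pos|auto]).
    assert (S3 : W1 t ^ 2 <= B ^ 2) by (apply Hsq; lra).
    assert (S4 : W2 t ^ 2 <= B ^ 2) by (apply Hsq; lra).
    pose proof (pow2_ge_0 (V1 t)). pose proof (pow2_ge_0 (V2 t)).
    pose proof (pow2_ge_0 (W1 t)). pose proof (pow2_ge_0 (W2 t)).
    assert (HS : Rabs (sigma0 n p * (W1 t ^ 2 + W2 t ^ 2)) <= Rabs (sigma0 n p) * (2 * B ^ 2)).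
    { rewrite Rabs_mult. rewrite (Rabs_right (W1 t ^ 2 + W2 t ^ 2)) by lra.
      apply Rmult_le_compat_l; [apply Rabs_pos|lra]. }
    pose proof (Rle_abs (sigma0 n p * (W1 t ^ 2 + W2 t ^ 2))) as HZ1.
    pose proof (Rle_abs (- (sigma0 n p * (W1 t ^ 2 + W2 t ^ 2)))) as HZ2. rewrite Rabs_Ropp in HZ2.
    set (X := V1 t ^ 2 + V2 t ^ 2 - sigma0 n p * (W1 t ^ 2 + W2 t ^ 2)).
    assert (HX : Rabs X <= MX) by (unfold X, MX; apply Rabs_le; split; lra).
    assert (Hc1 : 0 < p + 1) by (unfold p; lra).
    assert (Hr1 : rpow (W1 t) (p + 1) <= rpow B (p + 1)) by (apply rpow_mono; lra).
    assert (Hr2 : rpow (W2 t) (p + 1) <= rpow B (p + 1)) by (apply rpow_mono; lra).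
    assert (Hr3 : rpow (W1 t) (q + 1) <= rpow B (q + 1)) by (apply rpow_mono; lra).
    assert (Hr4 : rpow (W2 t) (q + 1) <= rpow B (q + 1)) by (apply rpow_mono; lra).
    set (Y := mu1 * rpow (W1 t) (p + 1) + 2 * beta * rpow (W1 t) (q + 1) * rpow (W2 t) (q + 1)
              + mu2 * rpow (W2 t) (p + 1)).
    assert (HY : 0 <= Y <= MY).
    { unfold Y, MY.
      pose proof (rpow_ge0 (W1 t) (p + 1)). pose proof (rpow_ge0 (W2 t) (p + 1)).
      pose proof (rpow_ge0 (W1 t) (q + 1)). pose proof (rpow_ge0 (W2 t) (q + 1)).
      assert (rpow (W1 t) (q + 1) * rpow (W2 t) (q + 1) <= rpow B (q + 1) * rpow B (q + 1))
        by (apply Rmult_le_compat; lra).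
      assert (0 <= rpow (W1 t) (q + 1) * rpow (W2 t) (q + 1)) by (apply Rmult_le_pos; lra).
      split; nra. }
    replace (Psibar n mu1 mu2 beta q W1 W2 V1 V2 t) with (/ 2 * X + / (p + 1) * Y) by reflexivity.
    assert (Hi : 0 < / (p + 1)) by (apply Rinv_0_lt_compat; lra).
    pose proof (Rle_abs X) as HX1. pose proof (Rle_abs (- X)) as HX2. rewrite Rabs_Ropp in HX2.
    assert (/ (p + 1) * Y <= / (p + 1) * MY) by (apply Rmult_le_compat_l; lra).
    assert (0 <= / (p + 1) * Y) by (apply Rmult_le_pos; lra).
    apply Rabs_le. split; lra.
  - exact HdPsi.
Qed.
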